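(* Let $p:[0,2\pi]\to[1,\infty)$ be a measurable, essentially bounded, $2\pi$-periodic, $\log$-H\''older continuous function, and let $q:[0,2\pi]\to[1,\infty)$ satisfy $\frac1{p(\theta)}+\frac1{q(\theta)}=1$ for every $\theta\in[0,2\pi]$. For $1/2<r<1$ and $z=|z|e^{i\theta}\in\mathbb{D}$ define $\varphi:[0,2\pi]\to(0,\infty)$ by $\varphi(t)=\frac{(1-|z|)^{1/q(\theta)}}{|1-|z|re^{i(t-\theta)}|}$. Then there is a constant $C>0$, independent of $r$, $z$ and $t$, such that whenever $\varphi(t)>1$ one has $\varphi(t)^{p(t)}\le C\,\varphi(t)^{p(\theta)}$.
   Context: $\mathbb{D}$ is the open unit disk. $p$ is $\log$-H\''older continuous if there is $C_{\log}>0$ with $|p(x)-p(y)|\le C_{\log}/\log(1/|x-y|)$ for all $x,y\in[0,2\pi]$. *)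

(* Defs.v *)
From HB Require Import structures.
From mathcomp Require Import all_boot all_order all_algebra.
From mathcomp Require Import all_classical all_reals all_analysis.
Set Implicit Arguments. Unset Strict Implicit. Unset Printing Implicit Defensive.
Import Order.TTheory GRing.Theory Num.Theory.
Import numFieldNormedType.Exports.
Local Open Scope classical_set_scope.
Local Open Scope ring_scope.

(* |1 - a e^{i alpha}| written out: sqrt((1 - a cos alpha)^2 + (a sin alpha)^2) *)
Definition abs_one_minus_exp {R : realType} (a alpha : R) : R :=
  Num.sqrt ((1 - a * cos alpha) ^+ 2 + (a * sin alpha) ^+ 2).

Definition log_holder {R : realType} (p : R -> R) : Prop :=
  exists Clog : R, 0 < Clog /\
    forall x y : R, (`[0, 2 * pi]%classic x) -> (`[0, 2 * pi]%classic y) ->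
      0 < `|x - y| < 2^-1 ->
      `|p x - p y| <= Clog / ln (`|x - y|)^-1.

(* the function phi of the statement, with z = rho e^{i theta} *)
Definition phi {R : realType} (q : R -> R) (r rho theta t : R) : R :=
  (1 - rho) `^ (q theta)^-1 / abs_one_minus_exp (rho * r) (t - theta).

(* Main.v *)
Require Import Defs.
From HB Require Import structures.
From mathcomp Require Import all_boot all_order all_algebra.
From mathcomp Require Import all_classical all_reals all_analysis.
From mathcomp Require Import ring lra.
Import Order.TTheory GRing.Theory Num.Theory.
Import numFieldNormedType.Exports.
Local Open Scope classical_set_scope.
Local Open Scope ring_scope.
Lemma sin_lb (R : realType) (b : R) : 0 <= b <= 1 -> b * cos 1 <= sin b.
Proof.
move=> /andP[b0 b1].
have [->|bpos] := eqVneq b 0; first by rewrite mul0r sin0.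
have bp : 0 < b by rewrite lt_neqAle eq_sym bpos.
have [c cI E] : exists2 c, c \in `]0, b[ & sin b - sin 0 = cos c * (b - 0).
  apply: MVT => //.
  by apply: continuous_subspaceT => x; exact: continuous_sin.
move: cI; rewrite in_itv /= => /andP[c0 cb].
rewrite sin0 subr0 subr0 in E; rewrite E mulrC ler_wpM2r //.
have pi1 : (1:R) <= pi by have := pi_ge2 R; lra.
have := @ltr_cos R c 1.
rewrite !in_itv /= pi1 ler01 (ltW c0) /=.
have -> : c <= pi by have := pi_ge2 R; lra.
move=> /(_ isT isT) H. apply: ltW; rewrite H. lra.
Qed.
Lemma D_ge (R : realType) (a al : R) :
  `|1 - a * cos al| <= abs_one_minus_exp a al /\ `|a * sin al| <= abs_one_minus_exp a al.
Proof.
rewrite /abs_one_minus_exp; split; rewrite -sqrtr_sqr ler_sqrt ?addr_ge0 ?sqr_ge0 //.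
- by rewrite lerDl sqr_ge0.
- by rewrite lerDr sqr_ge0.
Qed.
Lemma D_sym (R : realType) (a al : R) : abs_one_minus_exp a (- al) = abs_one_minus_exp a al.
Proof. by rewrite /abs_one_minus_exp cosN sinN mulrN sqrrN. Qed.
Lemma D_gt0 (R : realType) (a al : R) : 0 <= a < 1 -> 1 - a <= abs_one_minus_exp a al.
Proof.
move=> /andP[a0 a1]; have [H _] := @D_ge R a al; apply: le_trans H.
apply: le_trans (ler_norm _). have := @cos_le1 R al. nra.
Qed.
Lemma D_sin (R : realType) (a al s : R) : 0 <= a < 1 -> 0 <= s <= `|sin al| -> s <= 1 ->
  s / 2 <= abs_one_minus_exp a al.
Proof.
move=> /andP[a0 a1] /andP[s0 ss] s1.
have [aL|aH] := ltP a (2^-1).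
  apply: le_trans (@D_gt0 R a al _); [lra| by rewrite a0 a1].
have [_ H] := @D_ge R a al; apply: le_trans H.
rewrite normrM (ger0_norm a0). nra.
Qed.
Lemma D_cos (R : realType) (a al k : R) : 0 <= a < 1 -> cos al <= k -> 0 <= k ->
  1 - k <= abs_one_minus_exp a al.
Proof.
move=> /andP[a0 a1] ck k0; have [H _] := @D_ge R a al; apply: le_trans H.
apply: le_trans (ler_norm _). nra.
Qed.
Lemma LH (R : realType) (p : R -> R) (Cl : R) : 0 < Cl ->
  (forall x y : R, (`[0, 2 * pi]%classic x) -> (`[0, 2 * pi]%classic y) ->
      0 < `|x - y| < 2^-1 -> `|p x - p y| <= Cl / ln (`|x - y|)^-1) ->
  forall x y d : R, 0 <= x <= 2 * pi -> 0 <= y <= 2 * pi -> `|x - y| <= d -> 0 < d <= 4^-1 ->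
  `|p x - p y| <= Cl / ln d^-1.
Proof.
move=> Cl0 H x y d xI yI xyd /andP[d0 d4].
have ld : 0 < ln d^-1 by apply: ln_gt0; rewrite invf_gt1 //; lra.
have [->|xy] := eqVneq x y.
  by rewrite subrr normr0 divr_ge0 // ?ltW.
have xy0 : 0 < `|x - y| by rewrite normr_gt0 subr_eq0.
apply: le_trans (H x y _ _ _) _.
- by rewrite /= in_itv.
- by rewrite /= in_itv.
- by rewrite xy0 /=; lra.
have lx : 0 < ln `|x - y|^-1.
  apply: ln_gt0; rewrite invf_gt1 //; lra.
apply: ler_wpM2l; first exact: ltW.
rewrite lef_pV2 ?posrE //.
rewrite ler_ln ?posrE ?invr_gt0 // lef_pV2 ?posrE //.
Qed.
Lemma arith (R : realType) (d Cl L l4 A X : R) :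
  0 <= d -> d <= Cl / L -> l4 <= L -> 0 < l4 -> 0 <= A -> 0 <= Cl -> X <= A + L ->
  d * X <= Cl * A / l4 + Cl.
Proof.
move=> d0 dC lL l40 A0 C0 XA.
have L0 : 0 < L by apply: lt_le_trans l40 lL.
set e := Cl / L.
have eL : e * L = Cl by rewrite /e divfK // gt_eqF.
have e0 : 0 <= e by rewrite /e divr_ge0 // ltW.
apply: le_trans (ler_wpM2l d0 XA) _.
apply: le_trans (ler_wpM2r _ dC) _; first by apply: addr_ge0 => //; apply: ltW.
rewrite mulrDr eL lerD2r.
have CA : 0 <= Cl * A by exact: mulr_ge0.
rewrite mulrAC; apply: ler_wpM2l => //.
by rewrite lef_pV2 ?posrE.
Qed.
Lemma PB (R : realType) (p : R -> R) (Cl : R) : 0 < Cl ->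
  (forall x y : R, (`[0, 2 * pi]%classic x) -> (`[0, 2 * pi]%classic y) ->
      0 < `|x - y| < 2^-1 -> `|p x - p y| <= Cl / ln (`|x - y|)^-1) ->
  (forall x, 0 <= x <= 2 * pi -> 1 <= p x) ->
  exists P, 1 <= P /\ forall x, 0 <= x <= 2 * pi -> p x <= P.
Proof.
move=> Cl0 H p1.
set b := Cl / ln ((4:R)^-1)^-1.
have pi4 : pi < 4 :> R by have := @pihalf_lt2 R; lra.
have pi0 : 0 < pi :> R := pi_gt0 R.
have b0 : 0 <= b.
  rewrite /b divr_ge0 //; [exact: ltW | apply: ln_ge0; rewrite invrK; lra].
have I0 : 0 <= (0:R) <= 2 * pi by apply/andP; split; lra.
have step : forall x y, 0 <= x <= 2 * pi -> 0 <= y <= 2 * pi -> `|x - y| <= 4^-1 -> p x <= p y + b.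
  move=> x y xI yI xy; have := @LH R p Cl Cl0 H x y 4^-1 xI yI xy.
  rewrite -/b => /(_ _) h. have {}h := h ltac:(apply/andP; split; lra).
  have := ler_norm (p x - p y); lra.
have claim : forall n : nat, forall x, 0 <= x <= 2 * pi -> x <= n%:R / 4 -> p x <= p 0 + n%:R * b.
  elim=> [|n IH] x xI xn.
    have -> : x = 0 by move: xI xn; rewrite mul0r; lra.
    by rewrite mul0r addr0.
  have [xs|xl] := leP x (4^-1).
    apply: le_trans (step x 0 xI I0 _) _; first by rewrite subr0 ger0_norm; lra.
    rewrite lerD2l -[X in X <= _]mul1r; apply: ler_wpM2r => //.
    by rewrite ler1n.
  have yI : 0 <= x - 4^-1 <= 2 * pi by lra.
  have yn : x - 4^-1 <= n%:R / 4 by move: xn; rewrite -natr1; lra.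
  apply: le_trans (step x (x - 4^-1) xI yI _) _.
    by rewrite opprB addrC subrK ger0_norm; lra.
  have := IH _ yI yn; rewrite -natr1; lra.
exists (p 0 + 32%:R * b); split.
  have := p1 0 I0; have : 0 <= 32%:R * b by apply: mulr_ge0. lra.
move=> x xI; apply: claim => //.
have -> : (32%:R : R) = 32 by [].
lra.
Qed.
Lemma t2 (R : realType) : 2 * pi = pi *+ 2 :> R.
Proof. by rewrite mulr_natl. Qed.
Lemma sin2 (R : realType) (d : R) : sin (2 * pi - d) = - sin d.
Proof. by rewrite addrC t2 sinD2pi sinN. Qed.
Lemma cos2 (R : realType) (d : R) : cos (2 * pi - d) = cos d.
Proof. by rewrite addrC t2 cosD2pi cosN. Qed.
Lemma CORE (R : realType) (p : R -> R) (Cl P : R) : 0 < Cl ->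
  (forall x y : R, (`[0, 2 * pi]%classic x) -> (`[0, 2 * pi]%classic y) ->
      0 < `|x - y| < 2^-1 -> `|p x - p y| <= Cl / ln (`|x - y|)^-1) ->
  (forall x, 0 <= x <= 2 * pi -> 1 <= p x <= P) ->
  p (2 * pi) = p 0 ->
  forall x y a, 0 <= x <= 2 * pi -> 0 <= y <= 2 * pi -> 0 <= a < 1 ->
  `|p x - p y| * (- ln (abs_one_minus_exp a (x - y))) <=
    2 * Cl * ln (2 / cos 1) / ln ((4:R)^-1)^-1 + 2 * Cl + P * (- ln (1 - cos (4^-1))).
Proof.
move=> Cl0 H Pb per x y a xI yI aI.
wlog yx : x y xI yI / y <= x.
  move=> W; have [//|xy] := leP y x; first exact: W.
  rewrite distrC -[x - y]opprB D_sym; apply: W => //; exact: ltW.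
set c := cos 1; set A := ln (2 / c); set l4 := ln ((4:R)^-1)^-1.
set c0 := 1 - cos (4^-1).
have pi2 : 2 <= pi :> R := pi_ge2 R.
have pi4 : pi < 4 :> R by have := @pihalf_lt2 R; lra.
have c_gt0 : 0 < c := cos1_gt0 R.
have c_le1 : c <= 1 := cos_le1 1.
have A0 : 0 <= A by apply: ln_ge0; rewrite ler_pdivlMr //; lra.
have l40 : 0 < l4 by apply: ln_gt0; rewrite invrK; lra.
have cq0 : 0 <= cos (4^-1 : R).
  by apply: cos_ge0_pihalf; apply/andP; split; lra.
have cq1 : cos (4^-1 : R) < 1.
  rewrite -[X in _ < X]cos0 ltr_cos ?in_itv /=; try (apply/andP; split); lra.
have c00 : 0 < c0 by rewrite /c0; lra.
have c01 : c0 <= 1 by rewrite /c0; lra.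
have E0 : 0 <= - ln c0 by rewrite oppr_ge0 ln_le0.
have /andP[P1 P2] := Pb 0 ltac:(apply/andP; split; lra).
have P0 : 0 <= P by lra.
have KC : 0 <= P * (- ln c0) by apply: mulr_ge0.
have KA : 0 <= 2 * Cl * A / l4 + 2 * Cl.
  apply: addr_ge0; last lra. apply: divr_ge0; last exact: ltW.
  apply: mulr_ge0 => //; lra.
set K := (X in _ <= X).
set u := x - y.
have u0 : 0 <= u by rewrite /u; lra.
have Dpos : 0 < abs_one_minus_exp a u.
  by apply: lt_le_trans (@D_gt0 R a u aI); move: aI => /andP[]; lra.
set Dv := abs_one_minus_exp a u.
have d0 : 0 <= `|p x - p y| := normr_ge0 _.
have small : forall del Cl', 0 < del <= 4^-1 -> del * c <= `|sin u| ->
    `|p x - p y| <= Cl' / ln del^-1 -> 0 <= Cl' ->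
    `|p x - p y| * (- ln Dv) <= Cl' * A / l4 + Cl'.
  move=> del Cl' /andP[del0 del4] sd pd Cl'0.
  have s1 : del * c <= 1 by nra.
  have Dl : del * c / 2 <= Dv.
    apply: D_sin => //; apply/andP; split => //; apply: mulr_ge0 => //; lra.
  apply: arith pd _ l40 A0 Cl'0 _ => //.
    rewrite ler_ln ?posrE ?invr_gt0 // ?lef_pV2 ?posrE //; lra.
  have dc0 : 0 < del * c / 2 by apply: divr_gt0 => //; apply: mulr_gt0.
  have : ln (del * c / 2) <= ln Dv by rewrite ler_ln ?posrE.
  have -> : del * c / 2 = ((2 / c) * del^-1)^-1.
    by field; rewrite ?gt_eqF.
  rewrite lnV ?posrE; last by apply: mulr_gt0; [apply: divr_gt0|rewrite invr_gt0].
  rewrite lnM ?posrE ?invr_gt0 //; last by apply: divr_gt0.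
  rewrite -/A; lra.
have [uA|uA] := leP u (4^-1).
  have [u_eq0|u_ne0] := eqVneq u 0.
    have -> : x = y by move/eqP: u_eq0; rewrite /u; lra.
    by rewrite subrr normr0 mul0r; apply: addr_ge0.
  have upos : 0 < u by rewrite lt_neqAle eq_sym u_ne0.
  apply: le_trans (small u Cl _ _ _ _) _.
  - by apply/andP; split.
  - apply: le_trans (ler_norm _).
    by apply: sin_lb; apply/andP; split => //; lra.
  - by apply: (@LH R p Cl Cl0 H) => //; [rewrite -/u ger0_norm | apply/andP; split].
  - exact: ltW.
  - rewrite /K -addrA; apply: lerD; last lra.
    have hz : 0 <= Cl * A / l4 by apply: divr_ge0; [apply: mulr_ge0 => //; exact: ltW | exact: ltW].
    move: hz; rewrite -!mulrA; set z := Cl * _; lra.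
have [uB|uB] := leP (2 * pi - 4^-1) u.
  set del := 2 * pi - u.
  have del0 : 0 <= del by rewrite /del /u; lra.
  have [del_eq0|del_ne0] := eqVneq del 0.
    have x2 : x = 2 * pi by move: del_eq0; rewrite /del /u; lra.
    have y0 : y = 0 by move: del_eq0; rewrite /del /u; lra.
    by rewrite x2 y0 per subrr normr0 mul0r; apply: addr_ge0.
  have delp : 0 < del by rewrite lt_neqAle eq_sym del_ne0.
  have I2 : 0 <= (2 * pi : R) <= 2 * pi by apply/andP; split; lra.
  have I0 : 0 <= (0:R) <= 2 * pi by apply/andP; split; lra.
  have h1 : `|p x - p (2 * pi)| <= Cl / ln del^-1.
    apply: (@LH R p Cl Cl0 H) => //; last by apply/andP; split => //; rewrite /del; lra.
    rewrite distrC ger0_norm /del /u; lra.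
  have h2 : `|p 0 - p y| <= Cl / ln del^-1.
    apply: (@LH R p Cl Cl0 H) => //; last by apply/andP; split => //; rewrite /del; lra.
    rewrite sub0r normrN ger0_norm /del /u; lra.
  apply: le_trans (small del (2 * Cl) _ _ _ _) _.
  - apply/andP; split => //; rewrite /del; lra.
  - have -> : u = 2 * pi - del by rewrite /del; lra.
    rewrite sin2 normrN; apply: le_trans (ler_norm _).
    by apply: sin_lb; apply/andP; split => //; rewrite /del; lra.
    have -> : p x - p y = (p x - p (2 * pi)) + (p 0 - p y) by rewrite per; ring.
    apply: le_trans (ler_normD _ _) _.
    have -> : 2 * Cl / ln del^-1 = Cl / ln del^-1 + Cl / ln del^-1 by rewrite -mulrDl; congr (_ / _); lra.
    exact: lerD.
  - lra.
  - rewrite /K; lra.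
have cu : cos u <= cos (4^-1).
  have [up|up] := leP u pi.
    apply: ltW; rewrite ltr_cos ?in_itv /=; try (apply/andP; split); lra.
  rewrite -cos2; apply: ltW; rewrite ltr_cos ?in_itv /=; try (apply/andP; split); lra.
have Dl : c0 <= Dv by apply: D_cos.
have X : - ln Dv <= - ln c0 by rewrite lerN2 ler_ln ?posrE.
have dP : `|p x - p y| <= P.
  have := Pb x xI; have := Pb y yI; rewrite ler_norml; move=> /andP[? ?] /andP[? ?].
  apply/andP; split; lra.
apply: le_trans (_ : `|p x - p y| * (- ln c0) <= K).
  exact: ler_wpM2l.
apply: le_trans (ler_wpM2r E0 dP) _; rewrite /K; lra.
Qed.

Theorem lemma2p11 (R : realType) (p q : R -> R) :
  (forall x, (`[0, 2 * pi]%classic x) -> 1 <= p x) ->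
  measurable_fun `[0, 2 * pi]%classic p ->
  (exists M : R, {ae (@lebesgue_measure R), forall x, (`[0, 2 * pi]%classic x) -> p x <= M}) ->
  (forall x, p (x + 2 * pi) = p x) ->
  log_holder p ->
  (forall x, (`[0, 2 * pi]%classic x) -> 1 <= q x) ->
  (forall x, (`[0, 2 * pi]%classic x) -> (p x)^-1 + (q x)^-1 = 1) ->
  exists C : R, 0 < C /\
    forall r rho theta t : R,
      2^-1 < r < 1 -> 0 <= rho < 1 ->
      (`[0, 2 * pi]%classic theta) -> (`[0, 2 * pi]%classic t) ->
      1 < phi q r rho theta t ->
      phi q r rho theta t `^ (p t) <= C * phi q r rho theta t `^ (p theta).
Proof.
move=> p1 _ _ per [Cl [Cl0 H]] q1 _.
have p1' : forall x, 0 <= x <= 2 * pi -> 1 <= p x.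
  by move=> x xI; apply: p1; rewrite /= in_itv.
have [P [P1 PB']] := @PB R p Cl Cl0 H p1'.
have Pb : forall x, 0 <= x <= 2 * pi -> 1 <= p x <= P.
  by move=> x xI; rewrite p1' // PB'.
have per' : p (2 * pi) = p 0 by rewrite -[2 * pi]add0r per.
set K := (2 * Cl * ln (2 / cos 1) / ln ((4:R)^-1)^-1 + 2 * Cl + P * (- ln (1 - cos (4^-1)))).
exists (expR K); split; first exact: expR_gt0.
move=> r rho theta t /andP[r1 r2] /andP[rho0 rho1] thI tI phi1.
have thI' : 0 <= theta <= 2 * pi by move: thI; rewrite /= in_itv.
have tI' : 0 <= t <= 2 * pi by move: tI; rewrite /= in_itv.
have aI : 0 <= rho * r < 1 by apply/andP; split; nra.
have core := @CORE R p Cl P Cl0 H Pb per' t theta (rho * r) tI' thI' aI.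
have K0 : 0 <= K.
  have := @CORE R p Cl P Cl0 H Pb per' theta theta (rho * r) thI' thI' aI.
  by rewrite subrr normr0 mul0r.
set f := phi q r rho theta t in phi1 *.
have f0 : 0 < f by apply: lt_trans phi1.
have pw : forall z, f `^ z = expR (z * ln f) by move=> z; rewrite /powR gt_eqF.
rewrite !pw -expRD ler_expR.
have lf0 : 0 < ln f by apply: ln_gt0.
set Dv := abs_one_minus_exp (rho * r) (t - theta) in core.
have Dpos : 0 < Dv.
  by apply: lt_le_trans (@D_gt0 R (rho * r) (t - theta) aI); move: aI => /andP[]; lra.
set N := (1 - rho) `^ (q theta)^-1.
have N0 : 0 < N by apply: powR_gt0; lra.
have N1 : N <= 1.
  rewrite -(powRr0 (1 - rho)); apply: ger_powR; first by apply/andP; split; lra.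
  by rewrite invr_ge0; apply: le_trans (q1 _ thI); lra.
have fE : f = N / Dv by [].
have lnf : ln f <= - ln Dv.
  rewrite fE lnM ?posrE ?invr_gt0 // lnV ?posrE //.
  have := ln_le0 N1; lra.
have key : (p t - p theta) * ln f <= K.
  case: (boolP (p t - p theta <= 0)) => [dn|dn].
    apply: le_trans K0; exact: mulr_le0_ge0 dn (ltW lf0).
  have dp : 0 <= p t - p theta by move: dn; rewrite -ltNge; apply: ltW.
  apply: le_trans core.
  rewrite (ger0_norm dp).
  exact: (ler_wpM2l dp lnf).
move: key; rewrite mulrBl; lra.
Qed.
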